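(* Under the hypotheses of the preceding setting (regular minimal exponential family with log-partition $T$, agent with exponential utility coefficient $a>0$ and belief $p(\cdot;\hat\theta)$, $\hat\theta\in\Theta$), suppose the market maker uses the liquidity-adjusted cost $C_\lambda(\theta)=\frac1\lambda T(\lambda\theta)$ with inverse liquidity $\lambda>0$, and the current state is $\theta$ with $\lambda\theta\in\Theta$ and prices $\mu=\nabla C_\lambda(\theta)$. Let $\hat\mu=\nabla T(\hat\theta)$ and $\tilde\theta=\hat\theta/\lambda$ (so $\nabla C_\lambda(\tilde\theta)=\hat\mu$). Then the agent's unique expected-utility-maximizing trade $\delta$ moves the state to $$\theta+\delta=\frac{\lambda}{\lambda+a}\tilde\theta+\frac{a}{\lambda+a}\theta=\frac{\lambda}{\lambda+a}(\nabla C_\lambda)^{-1}(\hat\mu)+\frac{a}{\lambda+a}(\nabla C_\lambda)^{-1}(\mu).$$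
   Context: Exponential family with sufficient statistic $\phi:\mathcal{X}\to\mathbb{R}^d$ and base measure $\nu$: $p(x;\theta)=\exp(\langle\theta,\phi(x)\rangle-T(\theta))$, $T(\theta)=\log\int_{\mathcal{X}}\exp\langle\theta,\phi(x)\rangle\,d\nu(x)$, $\Theta=\{\theta:T(\theta)<\infty\}$ open, $\phi$ minimal. Exponential utility: $U_a(w)=-\frac1a e^{-aw}$. In a cost-function market with cost $C$, buying portfolio $\delta$ at state $\theta$ costs $C(\theta+\delta)-C(\theta)$, moves the state to $\theta+\delta$, and pays $\langle\delta,\phi(x)\rangle$ when outcome $x$ occurs. *)

(* Defs.v *)
From HB Require Import structures.
From mathcomp Require Import all_boot all_order all_algebra.
From mathcomp Require Import all_classical all_reals all_analysis.
Set Implicit Arguments. Unset Strict Implicit. Unset Printing Implicit Defensive.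
Import Order.TTheory GRing.Theory Num.Theory.
Import numFieldNormedType.Exports.
Local Open Scope classical_set_scope.
Local Open Scope ring_scope.

Section ExpFam.
Context {R : realType} {d : nat} {dX : measure_display} {X : measurableType dX}.
Variable nu : {measure set X -> \bar R}.
Variable phi : X -> 'rV[R]_d.

Definition dotv (u v : 'rV[R]_d) : R := \sum_(i < d) u ord0 i * v ord0 i.

Definition partition_int (th : 'rV[R]_d) : \bar R :=
  (\int[nu]_x (expR (dotv th (phi x)))%:E)%E.

Definition natparam : set 'rV[R]_d := [set th | (partition_int th < +oo)%E].

(* log-partition function T (meaningful on natparam) *)
Definition logpart (th : 'rV[R]_d) : R := ln (fine (partition_int th)).

Definition expfam_density (th : 'rV[R]_d) (x : X) : R :=
  expR (dotv th (phi x) - logpart th).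

Definition minimal_stat : Prop :=
  forall v : 'rV[R]_d, (exists c : R, {ae nu, forall x, dotv v (phi x) = c}) -> v = 0.

Definition lmsr_cost (lam : R) (th : 'rV[R]_d) : R := logpart (lam *: th) / lam.

Definition exp_utility (a w : R) : R := - a^-1 * expR (- a * w).

Definition expected_utility (a lam : R) (thhat th delta : 'rV[R]_d) : \bar R :=
  (\int[nu]_x (exp_utility a (dotv delta (phi x)
        - (lmsr_cost lam (th + delta) - lmsr_cost lam th))
      * expfam_density thhat x)%:E)%E.

Definition feasible_trade (lam : R) (th delta : 'rV[R]_d) : Prop :=
  natparam (lam *: (th + delta)).

Definition optimal_trade (a lam : R) (thhat th delta : 'rV[R]_d) : Prop :=
  feasible_trade lam th delta /\
  forall delta', feasible_trade lam th delta' ->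
    (expected_utility a lam thhat th delta' <= expected_utility a lam thhat th delta)%E.

End ExpFam.

(* Main.v *)
Require Import Defs.
From HB Require Import structures.
From mathcomp Require Import all_boot all_order all_algebra.
From mathcomp Require Import all_classical all_reals all_analysis.
From mathcomp Require Import measurable_realfun.
From mathcomp Require Import ring lra.
Import Order.TTheory GRing.Theory Num.Theory.
Import numFieldNormedType.Exports.
Local Open Scope classical_set_scope.
Local Open Scope ring_scope.

Section S.
Context {R : realType} {d : nat} {dX : measure_display} {X : measurableType dX}.
Variable nu : {measure set X -> \bar R}.
Variable phi : X -> 'rV[R]_d.
Hypothesis phi_meas : forall i : 'I_d, measurable_fun setT (fun x => phi x ord0 i).
Hypothesis nu_pos : (0 < nu setT)%E.

Lemma dotvD (u v y : 'rV[R]_d) : dotv (u + v) y = dotv u y + dotv v y.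
Proof. by rewrite /dotv -big_split; apply: eq_bigr => i _; rewrite !mxE mulrDl. Qed.
Lemma dotvZ k (u y : 'rV[R]_d) : dotv (k *: u) y = k * dotv u y.
Proof. by rewrite /dotv mulr_sumr; apply: eq_bigr => i _; rewrite !mxE mulrA. Qed.
Lemma dotvN (u y : 'rV[R]_d) : dotv (- u) y = - dotv u y.
Proof. by rewrite -scaleN1r dotvZ mulN1r. Qed.

Lemma meas_dot th : measurable_fun setT (fun x => dotv th (phi x)).
Proof.
rewrite /dotv; apply: measurable_sum => i.
by apply: measurable_funM => //; exact: measurable_cst.
Qed.

Lemma meas_edot th : measurable_fun setT (fun x => (expR (dotv th (phi x)))%:E).
Proof.
apply/measurable_EFinP; apply: measurableT_comp; first exact: measurable_expR.
exact: meas_dot.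
Qed.

Lemma Z_gt0 th : (0 < partition_int nu phi th)%E.
Proof.
rewrite /partition_int lt_neqAle integral_ge0 ?andbT; last first.
  by move=> x _; rewrite lee_fin expR_ge0.
apply/eqP => /esym H.
have : (\int[nu]_(x in setT) `|(expR (dotv th (phi x)))%:E| = 0)%E.
  by rewrite -H; apply: eq_integral => x _; rewrite gee0_abs // lee_fin expR_ge0.
move/(ae_eq_integral_abs nu measurableT (meas_edot th)).
move=> Hae.
have PF := ae_properfilter_algebraOfSetsType nu_pos.
have [x /= Hx] := filter_ex Hae.
by move: (Hx I) => /= [] /eqP; rewrite gt_eqF // expR_gt0.
Qed.

Lemma Z_fin th : natparam nu phi th ->
  partition_int nu phi th = (expR (logpart nu phi th))%:E.
Proof.
move=> H; rewrite /logpart lnK; last first.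
  rewrite posrE; have := Z_gt0 th; rewrite /natparam /= in H.
  by case: (partition_int nu phi th) H => //.
by rewrite fineK // ge0_fin_numE ?H // ltW // Z_gt0.
Qed.

Lemma intZ th c : 0 <= c ->
  (\int[nu]_x (c * expR (dotv th (phi x)))%:E = c%:E * partition_int nu phi th)%E.
Proof.
move=> c0; rewrite /partition_int.
under eq_integral => x _ do rewrite EFinM.
apply: ge0_integralZl_EFin => //.
all: try (by move=> x _; rewrite lee_fin expR_ge0).
all: try exact: meas_edot.
Qed.

Lemma expconv (q p A B : R) : 0 < q -> 0 < p -> q + p = 1 ->
  expR (q * A + p * B) <= q * expR A + p * expR B /\
  (expR (q * A + p * B) = q * expR A + p * expR B -> A = B).
Proof.
move=> q0 p0 qp.
set E := expR (q * A + p * B).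
have eA : expR A = E * expR (p * (A - B)).
  by rewrite /E -expRD; congr expR; rewrite -[A in LHS]mul1r -qp; ring.
have eB : expR B = E * expR (- (q * (A - B))).
  by rewrite /E -expRD; congr expR; rewrite -[B in LHS]mul1r -qp; ring.
have E0 : 0 < E by rewrite expR_gt0.
have h1 := expR_ge1Dx (p * (A - B)).
have h2 := expR_ge1Dx (- (q * (A - B))).
rewrite eA eB; split.
  have : 1 <= q * expR (p * (A - B)) + p * expR (- (q * (A - B))).
    have -> : 1 = q * (1 + p * (A - B)) + p * (1 + - (q * (A - B))).
      by rewrite -[X in X = _]qp; ring.
    by rewrite lerD // ler_pM2l.
  move=> H; rewrite mulrCA [p * (E * _)]mulrCA -mulrDr.
  by rewrite -[X in X <= _]mulr1 ler_pM2l.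
move=> H; apply/eqP; rewrite -subr_eq0; apply/negPn/negP => ne.
have h1' := expR_gt1Dx (mulf_neq0 (lt0r_neq0 p0) ne).
have : 1 < q * expR (p * (A - B)) + p * expR (- (q * (A - B))).
  have -> : 1 = q * (1 + p * (A - B)) + p * (1 + - (q * (A - B))).
    by rewrite -[X in X = _]qp; ring.
  by rewrite ltr_leD // ?ltr_pM2l // ler_pM2l.
rewrite mulrCA [p * (E * _)]mulrCA -mulrDr in H.
move: H; rewrite -[X in X = _]mulr1 => /mulfI H.
by rewrite -H ?ltxx // gt_eqF.
Qed.

Lemma meas_cedot c th : measurable_fun setT (fun x => (c * expR (dotv th (phi x)))%:E).
Proof.
apply/measurable_EFinP; apply: measurable_funM; first exact: measurable_cst.
by apply: measurableT_comp; [exact: measurable_expR|exact: meas_dot].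
Qed.

Lemma holder u v q p : 0 < q -> 0 < p -> q + p = 1 ->
  natparam nu phi u -> natparam nu phi v ->
  natparam nu phi (q *: u + p *: v) /\
  logpart nu phi (q *: u + p *: v) <= q * logpart nu phi u + p * logpart nu phi v /\
  (minimal_stat nu phi ->
   logpart nu phi (q *: u + p *: v) = q * logpart nu phi u + p * logpart nu phi v ->
   u = v).
Proof.
move=> q0 p0 qp Hu Hv.
have ZU := Z_fin u Hu; have ZV := Z_fin v Hv.
move: ZU ZV; move: (logpart nu phi u) (logpart nu phi v) => Tu Tv ZU ZV.
have Hdw y : dotv (q *: u + p *: v) y = q * dotv u y + p * dotv v y.
  by rewrite dotvD !dotvZ.
move: Hdw; move: (q *: u + p *: v) => w Hdw.
pose F x := expR (- (q * Tu + p * Tv)) * expR (dotv w (phi x)).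
pose G1 x := (q * expR (- Tu)) * expR (dotv u (phi x)).
pose G2 x := (p * expR (- Tv)) * expR (dotv v (phi x)).
have Hpt x : F x <= G1 x + G2 x /\
   (F x = G1 x + G2 x -> dotv u (phi x) - Tu = dotv v (phi x) - Tv).
  have [h1 h2] := @expconv q p (dotv u (phi x) - Tu) (dotv v (phi x) - Tv) q0 p0 qp.
  have eF : F x = expR (q * (dotv u (phi x) - Tu) + p * (dotv v (phi x) - Tv)).
    rewrite /F -expRD Hdw; congr expR; ring.
  have eG : G1 x + G2 x = q * expR (dotv u (phi x) - Tu) + p * expR (dotv v (phi x) - Tv).
    rewrite /G1 /G2 (expRD (dotv u (phi x))) (expRD (dotv v (phi x))).
    by congr (_ + _); rewrite -mulrA; congr (_ * _); exact: mulrC.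
  by rewrite eF eG.
have G10 x : (0 <= (G1 x)%:E)%E.
  by rewrite lee_fin mulr_ge0 ?expR_ge0 // mulr_ge0 ?expR_ge0 // ltW.
have G20 x : (0 <= (G2 x)%:E)%E.
  by rewrite lee_fin mulr_ge0 ?expR_ge0 // mulr_ge0 ?expR_ge0 // ltW.
have F0 x : (0 <= (F x)%:E)%E by rewrite lee_fin mulr_ge0 ?expR_ge0.
have mG1 : measurable_fun setT (fun x => (G1 x)%:E) by exact: meas_cedot.
have mG2 : measurable_fun setT (fun x => (G2 x)%:E) by exact: meas_cedot.
have mF : measurable_fun setT (fun x => (F x)%:E) by exact: meas_cedot.
have HG : (\int[nu]_x ((G1 x)%:E + (G2 x)%:E) = 1)%E.
  rewrite ge0_integralD //; try (by move=> x _; first [exact: G10|exact: G20]).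
  rewrite /G1 /G2 !intZ ?mulr_ge0 ?expR_ge0 ?ltW // ZU ZV.
  rewrite -[X in (X + _)%E]EFinM -[X in (_ + X)%E]EFinM -EFinD; congr EFin.
  by rewrite -(mulrA q) -(mulrA p) -!expRD !addNr !expR0 !mulr1 qp.
have HF : (\int[nu]_x (F x)%:E = (expR (- (q * Tu + p * Tv)))%:E * partition_int nu phi w)%E.
  by rewrite /F intZ ?expR_ge0.
have Hle : ((expR (- (q * Tu + p * Tv)))%:E * partition_int nu phi w <= 1)%E.
  rewrite -HF -HG; apply: ge0_le_integral => //.
  all: try exact: emeasurable_funD.
  all: try (by move=> x _; exact: F0).
  all: try (by move=> x _; rewrite adde_ge0).
  all: try (by move=> x _; rewrite -EFinD lee_fin; case: (Hpt x)).
have Hw : natparam nu phi w.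
  rewrite /natparam /=; move: Hle; case: (partition_int nu phi w) (Z_gt0 w) => [r _ _|_|//].
    exact: ltry.
  by rewrite mulry gtr0_sg ?expR_gt0 // mul1e.
have ZW := Z_fin w Hw.
move: ZW; move: (logpart nu phi w) => Tw ZW.
have Hle' : (expR (- (q * Tu + p * Tv)) * expR Tw <= 1).
  by rewrite -lee_fin EFinM -ZW.
split => //; split.
  move: Hle'; rewrite -expRD -expR0 ler_expR; lra.
move=> Hmin Heq.
have HF1 : (\int[nu]_x (F x)%:E = 1)%E.
  by rewrite HF ZW -EFinM -expRD Heq addNr expR0.
pose H x := G1 x + G2 x - F x.
have H0 x : (0 <= (H x)%:E)%E by rewrite lee_fin subr_ge0; case: (Hpt x).
have mH : measurable_fun setT (fun x => (H x)%:E).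
  apply/measurable_EFinP; apply: measurable_funB.
    by apply: measurable_funD; apply/measurable_EFinP.
  exact/measurable_EFinP.
have HH : (\int[nu]_x (H x)%:E = 0)%E.
  have : (\int[nu]_x ((F x)%:E + (H x)%:E) = 1)%E.
    rewrite -HG; apply: eq_integral => x _; rewrite -!EFinD /H; congr EFin.
    by rewrite addrC subrK.
  rewrite ge0_integralD //; try (by move=> x _; first [exact: H0|exact: F0]).
  rewrite HF1; case: (\int[nu]_x (H x)%:E)%E => [r||] //.
  by rewrite -EFinD => -[]; rewrite -[X in _ = X]addr0 => /addrI ->.
have : (\int[nu]_(x in setT) `|(H x)%:E| = 0)%E.
  by rewrite -HH; apply: eq_integral => x _; rewrite gee0_abs.
move/(ae_eq_integral_abs nu measurableT mH) => Hae.
apply/eqP; rewrite -subr_eq0; apply/eqP; apply: Hmin.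
exists (Tu - Tv); apply: filterS Hae => x /(_ I) /= [].
move/eqP; rewrite subr_eq0 eq_sym => /eqP /(proj2 (Hpt x)) E.
rewrite -[u - v]/(u + - v) dotvD dotvN; lra.
Qed.

Definition dC lam th delta := lmsr_cost nu phi lam (th + delta) - lmsr_cost nu phi lam th.

Lemma EU_eq a lam thhat th delta : 0 < a ->
  expected_utility nu phi a lam thhat th delta =
  (- ((a^-1 * expR (a * dC lam th delta - logpart nu phi thhat))%:E *
      partition_int nu phi (thhat - a *: delta)))%E.
Proof.
move=> a0; rewrite /expected_utility -/(dC lam th delta).
set c := a^-1 * expR (a * dC lam th delta - logpart nu phi thhat).
have c0 : 0 <= c by rewrite mulr_ge0 ?expR_ge0 // invr_ge0 ltW.
rewrite -intZ //; rewrite -integral_ge0N; last first.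
  by move=> x _; rewrite lee_fin mulr_ge0 ?expR_ge0.
apply: eq_integral => x _; rewrite -EFinN; congr EFin.
rewrite /exp_utility /expfam_density /c.
rewrite -[thhat - a *: delta]/(thhat + - (a *: delta)) dotvD dotvN dotvZ.
rewrite -!mulrA -!mulNr; congr (_ * _).
rewrite -!expRD; congr expR; ring.
Qed.

Lemma EU_fin a lam thhat th delta : 0 < a -> natparam nu phi (thhat - a *: delta) ->
  expected_utility nu phi a lam thhat th delta =
  (- (a^-1 * expR (a * dC lam th delta + logpart nu phi (thhat - a *: delta)
                    - logpart nu phi thhat)))%:E.
Proof.
move=> a0 Hv; rewrite EU_eq // Z_fin // -EFinM -EFinN; congr (- _)%:E.
rewrite -mulrA -expRD; congr (_ * expR _); ring.
Qed.

Lemma EU_inf a lam thhat th delta : 0 < a -> ~ natparam nu phi (thhat - a *: delta) ->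
  expected_utility nu phi a lam thhat th delta = (-oo)%E.
Proof.
move=> a0 Hv; rewrite EU_eq //.
have -> : partition_int nu phi (thhat - a *: delta) = (+oo)%E.
  move: Hv; rewrite /natparam /=; case: (partition_int _ _ _) (Z_gt0 (thhat - a *: delta)) => [r||] //.
  by move=> _ H; exfalso; apply: H; exact: ltry.
rewrite mulry gtr0_sg ?mul1e //.
by rewrite mulr_gt0 ?expR_gt0 // invr_gt0.
Qed.

Lemma main (Hmin : minimal_stat nu phi) (a lam : R) (a0 : 0 < a) (l0 : 0 < lam)
  (thhat th : 'rV[R]_d) (Hth : natparam nu phi thhat) (H0 : natparam nu phi (lam *: th))
  (delta : 'rV[R]_d) :
  optimal_trade nu phi a lam thhat th delta <->
  th + delta = (lam / (lam + a)) *: (lam^-1 *: thhat) + (a / (lam + a)) *: th.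
Proof.
have la0 : lam + a != 0 by rewrite gt_eqF // addr_gt0.
have l0' : lam != 0 by rewrite gt_eqF.
have hq : 0 < a / (lam + a) by rewrite divr_gt0 // addr_gt0.
have hp : 0 < lam / (lam + a) by rewrite divr_gt0 // addr_gt0.
have hqp : a / (lam + a) + lam / (lam + a) = 1 by field.
have Hcomb (dl : 'rV[R]_d) : (a / (lam + a)) *: (lam *: (th + dl)) + (lam / (lam + a)) *: (thhat - a *: dl)
    = (lam / (lam + a)) *: (thhat + a *: th).
  by apply/rowP => i; rewrite !mxE; field.
have Hw0 : (a / (lam + a)) *: (lam *: th) + (lam / (lam + a)) *: thhat
    = (lam / (lam + a)) *: (thhat + a *: th).
  by apply/rowP => i; rewrite !mxE; field.
pose ds := (lam / (lam + a)) *: (lam^-1 *: thhat) + (a / (lam + a)) *: th - th.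
have Hs1 : lam *: (th + ds) = (lam / (lam + a)) *: (thhat + a *: th).
  by apply/rowP => i; rewrite /ds !mxE; field; rewrite la0 l0'.
have Hs2 : thhat - a *: ds = (lam / (lam + a)) *: (thhat + a *: th).
  by apply/rowP => i; rewrite /ds !mxE; field; rewrite la0 l0'.
have [Hw _] := holder _ _ _ _ hq hp hqp H0 Hth.
rewrite Hw0 in Hw.
have HdC dl : dC lam th dl = (logpart nu phi (lam *: (th + dl)) - logpart nu phi (lam *: th)) / lam.
  by rewrite /dC /lmsr_cost mulrBl.
have Key dl : natparam nu phi (lam *: (th + dl)) -> natparam nu phi (thhat - a *: dl) ->
  a * dC lam th ds + logpart nu phi (thhat - a *: ds) <=
  a * dC lam th dl + logpart nu phi (thhat - a *: dl) /\
  (a * dC lam th dl + logpart nu phi (thhat - a *: dl) =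
   a * dC lam th ds + logpart nu phi (thhat - a *: ds) ->
   lam *: (th + dl) = thhat - a *: dl).
  move=> Hu Hv.
  have [_ [Hle Heq]] := holder _ _ _ _ hq hp hqp Hu Hv.
  rewrite Hcomb in Hle Heq.
  rewrite !HdC Hs1 Hs2.
  move: Hle Heq.
  move: (logpart nu phi (lam *: (th + dl))) (logpart nu phi (thhat - a *: dl))
        (logpart nu phi ((lam / (lam + a)) *: (thhat + a *: th)))
        (logpart nu phi (lam *: th)) => Tu Tv Tw T0 Hle Heq.
  have Hid : a * ((Tu - T0) / lam) + Tv - (a * ((Tw - T0) / lam) + Tw) =
     ((lam + a) / lam) * (a / (lam + a) * Tu + lam / (lam + a) * Tv - Tw).
    by field; rewrite ?la0 ?l0'.
  have hf : 0 < (lam + a) / lam by rewrite divr_gt0 // addr_gt0.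
  split.
    by rewrite -subr_ge0 Hid; apply: mulr_ge0; [exact: ltW | rewrite subr_ge0].
  move=> E; apply: (Heq Hmin).
  have : ((lam + a) / lam) * (a / (lam + a) * Tu + lam / (lam + a) * Tv - Tw) = 0.
    by rewrite -Hid E subrr.
  move/eqP; rewrite mulf_eq0 gt_eqF //= subr_eq0 => /eqP ->.
  by [].
have ai : 0 < a^-1 by rewrite invr_gt0.
have Hfs : feasible_trade nu phi lam th ds by rewrite /feasible_trade Hs1.
have Hvs : natparam nu phi (thhat - a *: ds) by rewrite Hs2.
split.
  case=> Hfeas Hopt.
  have Hle := Hopt ds Hfs.
  rewrite (EU_fin _ _ _ _ _ a0 Hvs) in Hle.
  have Hv : natparam nu phi (thhat - a *: delta).
    apply: contrapT => Hn; move: Hle; rewrite (EU_inf _ _ _ _ _ a0 Hn) //.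
  move: Hle; rewrite (EU_fin _ _ _ _ _ a0 Hv) lee_fin lerN2 ler_pM2l // ler_expR lerD2r => Hle.
  have [Kle Keq] := Key delta Hfeas Hv.
  have E := Keq (le_anti (introT andP (conj Hle Kle))).
  apply/rowP => i; move/rowP: E => /(_ i); rewrite !mxE => E.
  have Ht : thhat ord0 i = lam * (th ord0 i + delta ord0 i) + a * delta ord0 i.
    by rewrite E subrK.
  by rewrite Ht; field; rewrite ?la0 ?l0'.
move=> Heq.
have Hd : delta = ds by rewrite /ds -Heq addrAC subrr add0r.
rewrite Hd; split; first exact: Hfs.
move=> dl Hf.
have [Hv|Hn] := pselect (natparam nu phi (thhat - a *: dl)).
  rewrite (EU_fin _ _ _ _ _ a0 Hv) (EU_fin _ _ _ _ _ a0 Hvs) lee_fin lerN2 (ler_pM2l ai).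
  rewrite ler_expR lerD2r; have [K1 _] := Key dl Hf Hv; exact: K1.
rewrite (EU_inf _ _ _ _ _ a0 Hn); exact: leNye.
Qed.
End S.

Theorem corollary4 (R : realType) (d : nat) (dX : measure_display)
    (X : measurableType dX) (nu : {measure set X -> \bar R})
    (phi : X -> 'rV[R]_d)
    (phi_meas : forall i : 'I_d, measurable_fun setT (fun x => phi x ord0 i))
    (nu_pos : (0 < nu setT)%E)
    (Theta_open : open (natparam nu phi))
    (phi_min : minimal_stat nu phi)
    (a lam : R) (a_pos : 0 < a) (lam_pos : 0 < lam)
    (thhat th : 'rV[R]_d)
    (thhat_in : natparam nu phi thhat)
    (th_in : natparam nu phi (lam *: th)) :
  forall delta : 'rV[R]_d,
    optimal_trade nu phi a lam thhat th delta <->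
    th + delta = (lam / (lam + a)) *: (lam^-1 *: thhat) + (a / (lam + a)) *: th.
Proof.
move=> delta.
exact: (main nu phi phi_meas nu_pos phi_min a lam a_pos lam_pos thhat th thhat_in th_in delta).
Qed.
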